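(* Let $n\geq 1$ and $N > n$, and consider the operator on symmetric polynomials in $x_1,\ldots,x_N$ $$D^\ast = \sum_{i=1}^N x_i^2\frac{\partial^2}{\partial x_i^2} + \sum_{i\neq j}\frac{1}{x_i-x_j}\left(x_i^2\frac{\partial}{\partial x_i} - x_j^2\frac{\partial}{\partial x_j}\right).$$ Then for every $\sigma\in P(n)$, $$\tfrac12 D^\ast(p_\sigma) = n(N-1)\,p_\sigma + \sum_{\lambda\in P(n)} (A_n)_{\sigma\lambda}\, p_\lambda;$$ that is, the matrix of $\frac12 D^\ast$ on the span of $\{p_\lambda\}_{\lambda\in P(n)}$ with respect to this basis (columns giving the coordinates of the images of basis vectors) is $A_n^T + n(N-1)I$.
   Context: $P(n)$ is the set of partitions of $n$. $p_r = \sum_{i=1}^N x_i^r$ and, for $\lambda = 1^{k_1}2^{k_2}\cdots$, $p_\lambda = p_1^{k_1}p_2^{k_2}\cdots$ (power sum symmetric polynomials). $A_n$ is the square matrix indexed by $P(n)$ whose $(\lambda,\sigma)$ entry is the number of transpositions $\tau\in S_n$ such that $\tau\alpha$ has cycle type $\sigma$, where $\alpha$ is any fixed permutation of cycle type $\lambda$. *)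

(* Defs.v *)
From HB Require Import structures.
From mathcomp Require Import all_boot all_order all_algebra all_fingroup.
From mathcomp Require Import mpoly.
Set Implicit Arguments. Unset Strict Implicit. Unset Printing Implicit Defensive.
Import GRing.Theory Num.Theory.
Local Open Scope ring_scope.

(* Partitions of n, encoded by multiplicities: lambda = 1^{k 0} 2^{k 1} ... n^{k (n-1)},
   i.e. k i = number of parts equal to i+1. *)
Definition mult_vec (n : nat) := {ffun 'I_n -> 'I_n.+1}.

Definition is_partition (n : nat) (k : mult_vec n) : bool :=
  (\sum_(i < n) (i.+1 * k i))%N == n.

Definition cycle_type (n : nat) (s : 'S_n) : mult_vec n :=
  [ffun i : 'I_n => inord #|[set c in porbits s | #|c| == i.+1]|].

Definition is_transposition (n : nat) (t : 'S_n) : bool :=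
  [exists x : 'I_n, exists y : 'I_n, (x != y) && (t == tperm x y)].

(* (A_n)_{lambda,sigma}: number of transpositions tau with tau*alpha of cycle type sigma,
   alpha a (chosen) permutation of cycle type lambda. *)
Definition A_entry (n : nat) (lam sig : mult_vec n) : nat :=
  match [pick a : 'S_n | cycle_type a == lam] with
  | Some a => #|[set t : 'S_n | is_transposition t &&
                   (cycle_type (t * a)%g == sig)]|
  | None => 0%N
  end.

Definition psum (R : comRingType) (N r : nat) : {mpoly R[N]} :=
  \sum_(i < N) 'X_i ^+ r.

Definition psum_part (R : comRingType) (N n : nat) (k : mult_vec n) : {mpoly R[N]} :=
  \prod_(i < n) psum R N i.+1 ^+ k i.

(* Dstar_is p q : q = D^*(p), where
   D^* = sum_i x_i^2 d^2/dx_i^2 + sum_{i<>j} (x_i^2 d/dx_i - x_j^2 d/dx_j)/(x_i - x_j).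
   The quotients are required to be exact polynomial quotients r i j. *)
Definition Dstar_is (R : comRingType) (N : nat) (p q : {mpoly R[N]}) : Prop :=
  exists r : 'I_N -> 'I_N -> {mpoly R[N]},
    (forall i j : 'I_N, i != j ->
       ('X_i - 'X_j) * r i j = 'X_i ^+ 2 * mderiv i p - 'X_j ^+ 2 * mderiv j p) /\
    q = \sum_(i < N) 'X_i ^+ 2 * mderiv i (mderiv i p)
        + \sum_(i < N) \sum_(j < N | j != i) r i j.

(* Main.v *)
Require Import Defs.
From HB Require Import structures.
From mathcomp Require Import all_boot all_order all_algebra all_fingroup.
From mathcomp Require Import zify.
Set Implicit Arguments. Unset Strict Implicit. Unset Printing Implicit Defensive.

From mathcomp Require Import mpoly ring.
Import GRing.Theory Num.Theory.

Section Orb.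
Variable n : nat.
Implicit Types (a b : 'S_n) (x y k : 'I_n).

Lemma expS_app a i x : (a ^+ i.+1)%g x = a ((a ^+ i)%g x).
Proof. by rewrite expgSr permM. Qed.

Definition rr a k := #|porbit a k|.

Lemma rr_gt0 a k : 0 < rr a k.
Proof. by rewrite lt0n card_porbit_neq0. Qed.

Lemma exp_inj a k i j : i < rr a k -> j < rr a k ->
  (a ^+ i)%g k = (a ^+ j)%g k -> i = j.
Proof.
move=> ilt jlt; rewrite !permX => e.
have U := uniq_traject_porbit a k.
apply/eqP; rewrite -(nth_uniq k _ _ U) ?size_traject //.
by rewrite !nth_traject // e.
Qed.

Lemma exp_rr a k : (a ^+ rr a k)%g k = k.
Proof. by rewrite permX iter_porbit. Qed.

Lemma exp_mod a k i : (a ^+ i)%g k = (a ^+ (i %% rr a k))%g k.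
Proof.
rewrite {1}(divn_eq i (rr a k)) expgD permM.
elim: (i %/ rr a k) => [|q IH]; first by rewrite mul0n expg0 perm1.
by rewrite mulSn expgD permM exp_rr IH.
Qed.

Lemma memC a k y : reflect (exists2 i, i < rr a k & y = (a ^+ i)%g k)
  (y \in porbit a k).
Proof.
apply: (iffP idP) => [/porbitP [i ->]|[i _ ->]]; last exact: mem_porbit.
by exists (i %% rr a k); [rewrite ltn_pmod // rr_gt0 | exact: exp_mod].
Qed.

Lemma porbit_eq a x y : y \in porbit a x -> porbit a y = porbit a x.
Proof. by rewrite -eq_porbit_mem => /eqP. Qed.

Lemma porbit_app a x : porbit a (a x) = porbit a x.
Proof. by apply: porbit_eq; rewrite -(expg1 a) mem_porbit. Qed.

Lemma porbit_closed a x y : (a y \in porbit a x) = (y \in porbit a x).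
Proof. by rewrite -!eq_porbit_mem porbit_app. Qed.

Lemma porbits_mem a c : c \in porbits a -> exists x, c = porbit a x.
Proof. by case/imsetP => x _ ->; exists x. Qed.

Lemma porbit_in a x : porbit a x \in porbits a.
Proof. by apply: imset_f. Qed.

Lemma porbits_uniq a c x : c \in porbits a -> x \in c -> c = porbit a x.
Proof. by move=> /porbits_mem [y ->] /porbit_eq ->. Qed.

Lemma porbits_card a c : c \in porbits a -> 0 < #|c| <= n.
Proof.
move=> /porbits_mem [x ->]; rewrite rr_gt0 /=.
by rewrite -{9}(card_ord n) max_card.
Qed.

Lemma porbits_sum a : (\sum_(c in porbits a) #|c|)%N = n.
Proof.
have tP : trivIset (porbits a).
  apply/trivIsetP => c1 c2 /porbits_mem [x ->] /porbits_mem [y ->] ne.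
  apply/pred0P => z /=; apply/negP => /andP [zx zy].
  by move: ne; rewrite -(porbit_eq zx) -(porbit_eq zy) eqxx.
have cov : cover (porbits a) = [set: 'I_n].
  apply/setP => z; rewrite inE; apply/bigcupP.
  exists (porbit a z); [exact: porbit_in | exact: porbit_id].
by rewrite (eqP tP) cov cardsT card_ord.
Qed.

End Orb.
Section Fix.
Variable (n : nat) (T : eqType).
Implicit Types (a b : 'S_n) (x y k l : 'I_n) (f : 'I_n -> T).

Lemma fix_orbit a f x y : (forall z, f (a z) = f z) -> y \in porbit a x -> f y = f x.
Proof.
move=> H /porbitP [i ->]; elim: i => [|i IH]; first by rewrite expg0 perm1.
by rewrite expS_app H.
Qed.

Lemma fix_tperm a f k l : f k = f l ->
  (forall x, f ((tperm k l * a)%g x) = f x) <-> (forall x, f (a x) = f x).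
Proof.
move=> e; have ft z : f (tperm k l z) = f z by case: tpermP => // ->.
split => H x.
  by have := H (tperm k l x); rewrite permM tpermK ft.
by rewrite permM H ft.
Qed.

Lemma fix_merge a f k l : l \notin porbit a k ->
  (forall x, f ((tperm k l * a)%g x) = f x) -> f k = f l.
Proof.
move=> nl H.
have kl : k != l by apply: contraNneq nl => ->; exact: porbit_id.
have nk : k \notin porbit a l by rewrite porbit_sym.
have fal : f (a l) = f k by rewrite -(H k) permM tpermL.
have st s : 0 < s <= rr a l -> f ((a ^+ s)%g l) = f (a l).
  elim: s => [//|s IH] /andP [_ sle].
  case: s IH sle => [|s] IH sle; first by rewrite expg1.
  rewrite expS_app -IH ?(ltnW sle) //.
  set y := (a ^+ s.+1)%g l.
  have yl : y != l.
    apply/eqP => e; have := @exp_inj _ a l s.+1 0 sle (rr_gt0 _ _).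
    by rewrite expg0 perm1 => /(_ e).
  have yk : y != k by apply: contraNneq nk => <-; exact: mem_porbit.
  by rewrite -(H y) permM tpermD // eq_sym.
have := st (rr a l); rewrite rr_gt0 leqnn exp_rr => /(_ isT).
by rewrite fal.
Qed.

End Fix.
Section Surg.
Variable (n : nat) (a : 'S_n) (k : 'I_n) (d : nat).
Hypothesis (d_gt0 : 0 < d) (d_lt : d < rr a k).
Local Notation r := (rr a k).
Local Notation C := (porbit a k).
Definition ll := (a ^+ d)%g k.
Definition bb := (tperm k ll * a)%g.
Definition A1 := [set (a ^+ j.+1)%g k | j : 'I_d].
Definition A2 := C :\: A1.

Lemma bE x : bb x = a (tperm k ll x).
Proof. by rewrite permM. Qed.

Lemma card_A1 : #|A1| = d.
Proof.
rewrite card_imset ?card_ord // => i j /exp_inj.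
move=> /(_ (leq_ltn_trans (ltn_ord i) d_lt) (leq_ltn_trans (ltn_ord j) d_lt)).
by move=> [] /val_inj.
Qed.

Lemma A1_sub : A1 \subset C.
Proof. by apply/subsetP => y /imsetP [j _ ->]; exact: mem_porbit. Qed.

Lemma card_A2 : #|A2| = r - d.
Proof. by rewrite cardsD (setIidPr A1_sub) card_A1. Qed.

Lemma memA1_exp i : i < r -> ((a ^+ i)%g k \in A1) = (0 < i <= d).
Proof.
move=> ir; apply/imsetP/idP => [[j _ /exp_inj e]|/andP [i0 id]].
  by rewrite (e ir (leq_ltn_trans (ltn_ord j) d_lt)) /=; exact: ltn_ord.
have h : i.-1 < d by rewrite prednK.
by exists (Ordinal h) => //=; rewrite prednK.
Qed.

Lemma k_notA1 : k \notin A1.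
Proof. by have := memA1_exp (rr_gt0 a k); rewrite expg0 perm1 => ->. Qed.

Lemma memA2_exp i : i <= r -> d < i -> (a ^+ i)%g k \in A2.
Proof.
move=> ir di; rewrite inE mem_porbit andbT.
case: (ltngtP i r) ir => // [ir|->] _.
  by rewrite memA1_exp // (leqNgt i d) di andbF.
by rewrite exp_rr k_notA1.
Qed.

Lemma k_A2 : k \in A2.
Proof. by rewrite inE porbit_id k_notA1. Qed.

Lemma ak_A1 : a k \in A1.
Proof. by rewrite -{1}(expg1 a) memA1_exp // (leq_ltn_trans d_gt0 d_lt). Qed.

Lemma bk : bb k = (a ^+ d.+1)%g k.
Proof. by rewrite bE tpermL expS_app. Qed.

Lemma bl : bb ll = a k.
Proof. by rewrite bE tpermR. Qed.

Lemma bi i : i < r -> i != 0 -> i != d -> bb ((a ^+ i)%g k) = (a ^+ i.+1)%g k.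
Proof.
move=> ir i0 id; rewrite bE tpermD ?expS_app //.
  apply: contra i0 => /eqP e; apply/eqP.
  by apply: (@exp_inj _ a k i 0 ir (rr_gt0 _ _)); rewrite expg0 perm1.
apply: contra id => /eqP e; apply/eqP.
by apply: (@exp_inj _ a k i d ir d_lt); rewrite -e.
Qed.

Lemma A1_closed y : y \in A1 -> bb y \in A1.
Proof.
case/imsetP => j _ ->.
case: (ltngtP j.+1 d) (ltn_ord j) => // [jd|->] _.
  rewrite bi // ?(ltn_trans jd d_lt) // ?(ltn_eqF jd) //.
  by rewrite memA1_exp ?(leq_ltn_trans jd d_lt).
by rewrite bl ak_A1.
Qed.

Lemma A2_closed y : y \in A2 -> bb y \in A2.
Proof.
move=> yA; have := yA; rewrite inE => /andP [yA1 /memC [i ir ye]].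
move: yA1; rewrite ye memA1_exp //.
case: (posnP i) => [->|i0] /=.
  by rewrite expg0 perm1 bk memA2_exp.
rewrite -ltnNge => di; rewrite bi ?(gtn_eqF di) ?(gtn_eqF i0) //.
by rewrite memA2_exp // ltnW.
Qed.

Lemma closed_sub (A : {set 'I_n}) x : (forall y, y \in A -> bb y \in A) ->
  x \in A -> porbit bb x \subset A.
Proof.
move=> cl xA; apply/subsetP => y /porbitP [i ->].
elim: i => [|i IH]; first by rewrite expg0 perm1.
by rewrite expS_app cl.
Qed.

Lemma porbit_A1 : porbit bb (a k) = A1.
Proof.
apply/eqP; rewrite eqEsubset closed_sub ?ak_A1 //=; last exact: A1_closed.
have it j : j < d -> (bb ^+ j)%g (a k) = (a ^+ j.+1)%g k.
  elim: j => [|j IH] jd; first by rewrite expg0 perm1 expg1.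
  rewrite [LHS]expS_app IH ?(ltnW jd) // bi ?(ltn_eqF jd) //; exact: ltn_trans jd d_lt.
apply/subsetP => y /imsetP [j _ ->]; rewrite -it //; exact: mem_porbit.
Qed.

Lemma porbit_A2 : porbit bb k = A2.
Proof.
apply/eqP; rewrite eqEsubset closed_sub ?k_A2 //=; last exact: A2_closed.
have it s : d + s.+1 <= r -> (bb ^+ s.+1)%g k = (a ^+ (d + s.+1))%g k.
  elim: s => [|s IH] sr; first by rewrite expg1 bk addn1.
  have sr' : d + s.+1 < r by move: sr; rewrite !addnS.

  rewrite [LHS]expS_app IH ?(ltnW sr') // bi // ?addnS //.
  by rewrite gtn_eqF // ltnS leq_addr.
apply/subsetP => y; rewrite inE => /andP [yA1 /memC [i ir ye]].
move: yA1; rewrite ye memA1_exp //.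
case: (posnP i) => [->|i0] /=; first by rewrite expg0 perm1 porbit_id.
rewrite -ltnNge => di.
have -> : i = d + (i - d).-1.+1 by rewrite prednK ?subn_gt0 // subnKC // ltnW.
rewrite -it; first exact: mem_porbit.
by rewrite prednK ?subn_gt0 // subnKC // ltnW.
Qed.

Lemma porbit_out x : x \notin C -> porbit bb x = porbit a x.
Proof.
move=> xC.
have kC : k \in C := porbit_id a k.
have lC : ll \in C by exact: mem_porbit.
have it i : (bb ^+ i)%g x = (a ^+ i)%g x.
  elim: i => [|i IH]; first by rewrite !expg0.
  rewrite !expS_app IH bE tpermD //.
    by apply: contraNneq xC => e; rewrite porbit_sym e mem_porbit.
  apply: contraNneq xC => e.
  by rewrite porbit_sym -(porbit_perm a i x) -e (porbit_eq lC) porbit_id.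
by apply/setP => y; apply/porbitP/porbitP => [[i ->]|[i ->]]; exists i.
Qed.

Lemma porbits_bb : porbits bb = (porbits a :\ C) :|: [set A1; A2].
Proof.
apply/setP => c; apply/idP/idP.
  case/imsetP => x _ ->; rewrite !inE.
  case: (boolP (x \in C)) => xC.
    case: (boolP (x \in A1)) => xA1.
      by rewrite (porbit_eq (_ : x \in porbit bb (a k))) ?porbit_A1 ?eqxx ?orbT.
    have xA2 : x \in A2 by rewrite inE xA1.
    by rewrite (porbit_eq (_ : x \in porbit bb k)) ?porbit_A2 ?eqxx ?orbT.
  rewrite porbit_out // porbit_in andbT; apply/orP; left.
  by apply: contraNneq xC => <-; exact: porbit_id.
rewrite !inE => /orP [/andP [cC /porbits_mem [x cx]]|/orP [] /eqP ->].
- have xC : x \notin C.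
    by apply: contra cC => xC; rewrite cx; apply/eqP; exact: porbit_eq.
  by rewrite cx -(porbit_out xC); exact: porbit_in.
- by rewrite -porbit_A1 porbit_in.
- by rewrite -porbit_A2 porbit_in.
Qed.

Lemma A12_notin : (A1 \notin porbits a :\ C) && (A2 \notin porbits a :\ C).
Proof.
rewrite !inE !negb_and !negbK.
apply/andP; split; apply/orP; right; apply/negP => /porbits_mem [x e].
  have := ak_A1; rewrite e => /porbit_eq; rewrite porbit_app -e => eC.
  by have := k_notA1; rewrite -eC porbit_id.
have := k_A2; rewrite e => /porbit_eq; rewrite -e => eC.
have : a k \in A2 by rewrite -eC -{1}(expg1 a) mem_porbit.
by rewrite inE ak_A1.
Qed.

Lemma A12_neq : A1 != A2.
Proof.
by apply/eqP => e; have := ak_A1; rewrite e inE ak_A1.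
Qed.

Lemma big_bb (R : Type) (idx : R) (op : Monoid.com_law idx) (F : {set 'I_n} -> R) :
  \big[op/idx]_(c in porbits bb) F c =
  op (F A1) (op (F A2) (\big[op/idx]_(c in porbits a :\ C) F c)).
Proof.
case/andP: A12_notin => n1 n2.
rewrite porbits_bb setUC -setUA big_setU1 /=; last first.
  by rewrite in_setU1 negb_or A12_neq n1.
by rewrite big_setU1.
Qed.

Lemma big_aa (R : Type) (idx : R) (op : Monoid.com_law idx) (F : {set 'I_n} -> R) :
  \big[op/idx]_(c in porbits a) F c =
  op (F C) (\big[op/idx]_(c in porbits a :\ C) F c).
Proof. by rewrite (big_setD1 C) // porbit_in. Qed.

End Surg.
Section Exist.
Variable n : nat.

Definition cnt (P : {set {set 'I_n}}) s := #|[set c in P | #|c| == s]|.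

Lemma cnt_sum P s : cnt P s = (\sum_(c in P) (#|c| == s))%N.
Proof.
rewrite /cnt -sum1_card big_mkcond /= [RHS]big_mkcond /=.
by apply: eq_bigr => c _; rewrite !inE; case: (c \in P); case: (_ == _).
Qed.

Lemma shift_exists : 0 < n -> exists b : 'S_n, porbits b = [set [set: 'I_n]].
Proof.
move=> n0; pose sh := perm (@ordS_inj n).
have it i : val ((sh ^+ i)%g (Ordinal n0)) = i %% n.
  elim: i => [|i IH]; first by rewrite expg0 perm1 /= mod0n.
  by rewrite expS_app permE /= IH -addn1 modnDml addn1.
have all0 : porbit sh (Ordinal n0) = [set: 'I_n].
  apply/setP => y; rewrite inE; apply/porbitP; exists y.
  by apply/val_inj; rewrite it modn_small.
exists sh; apply/setP => c; rewrite inE; apply/imsetP/eqP => [[x _ ->]|->].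
  by rewrite (porbit_eq (_ : x \in porbit sh (Ordinal n0))) // all0 inE.
by exists (Ordinal n0).
Qed.

Lemma exists_perm (L : seq nat) : 0 < n -> all (leq 1) L -> sumn L = n ->
  exists b : 'S_n, forall s, cnt (porbits b) s = count_mem s L.
Proof.
move=> n0; elim: {L}_.+1 {-2}L (ltnSn (size L)) => // m IH [|r1 [|r2 L]] /= sz.
- by move=> _ e; rewrite -e in n0.
- move=> _; rewrite addn0 => e; have [b bE] := shift_exists n0.
  exists b => s; rewrite cnt_sum bE big_set1 cardsT card_ord.
  by rewrite addn0 e eq_sym.
- move=> /and3P [r1p r2p Lp] e.
  have [b bc] : exists b : 'S_n, forall s, cnt (porbits b) s =
      count_mem s (r1 + r2 :: L).
    apply: IH => /=; [by [] | | by rewrite -addnA].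
    by rewrite Lp andbT (leq_trans r1p) // leq_addr.
  have : 0 < cnt (porbits b) (r1 + r2) by rewrite bc /= eqxx.
  rewrite /cnt card_gt0 => /set0Pn [c]; rewrite inE => /andP [cb /eqP cs].
  have [k ck] := porbits_mem cb.
  have rk : rr b k = r1 + r2 by rewrite /rr -ck.
  have d_lt : r1 < rr b k by rewrite rk -{1}(addn0 r1) ltn_add2l.
  exists (bb b k r1) => s.
  have e1 : (cnt (porbits (bb b k r1)) s + (r1 + r2 == s) =
     (r1 == s) + (r2 == s) + cnt (porbits b) s)%N.
    rewrite !cnt_sum big_bb // (big_aa b k) /= card_A1 // card_A2 //.
    rewrite -/(rr b k) rk addKn; lia.
  move: e1; rewrite bc /= => e1; apply/eqP.
  rewrite -(eqn_add2r (r1 + r2 == s)) e1.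
  by rewrite -!addnA !eqn_add2l addnC.
Qed.
End Exist.
Section CT.
Variable n : nat.

Lemma cnt_le (b : 'S_n) s : cnt (porbits b) s <= n.
Proof.
rewrite /cnt (@leq_trans #|porbits b|) //.
  by apply/subset_leq_card/subsetP => c; rewrite inE => /andP [].
by apply: (leq_trans (leq_imset_card _ _)); rewrite card_ord.
Qed.

Lemma cycle_typeE (b : 'S_n) (i : 'I_n) : (cycle_type b i : nat) = cnt (porbits b) i.+1.
Proof. by rewrite ffunE inordK // ltnS cnt_le. Qed.

Lemma big_by_size (R : Type) (idx : R) (op : Monoid.com_law idx)
   (P : {set {set 'I_n}}) (F : nat -> R) :
  (forall c, c \in P -> 0 < #|c| <= n) ->
  \big[op/idx]_(c in P) F #|c| =
  \big[op/idx]_(i < n) \big[op/idx]_(c in [set c in P | #|c| == i.+1]) F i.+1.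
Proof.
move=> Pc.
have -> : \big[op/idx]_(i < n) \big[op/idx]_(c in [set c in P | #|c| == i.+1]) F i.+1
  = \big[op/idx]_(i < n) \big[op/idx]_(c in P) (if #|c| == i.+1 then F #|c| else idx).
  apply: eq_bigr => i _; rewrite big_mkcond [RHS]big_mkcond; apply: eq_bigr => c _.
  by rewrite inE; case: (c \in P) => //=; case: eqP => // ->.
rewrite exchange_big /=; apply: eq_bigr => c cP.
have /andP [c0 cn] := Pc c cP.
have h : #|c|.-1 < n by rewrite prednK.
rewrite -big_mkcond (big_pred1 (Ordinal h)) // => i /=.
by apply/eqP/eqP => [e|->]; [apply/val_inj; rewrite /= e | rewrite /= prednK].
Qed.

Lemma ct_partition (b : 'S_n) : is_partition (cycle_type b).
Proof.
apply/eqP; transitivity (\sum_(c in porbits b) #|c|)%N; last exact: porbits_sum.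
rewrite (big_by_size addn (fun x => x)); last exact: porbits_card.
by apply: eq_bigr => i _; rewrite cycle_typeE sum_nat_const mulnC.
Qed.

Lemma ct_exists (sig : mult_vec n) : 0 < n -> is_partition sig ->
  exists b : 'S_n, cycle_type b = sig.
Proof.
move=> n0 /eqP sp.
pose L := \big[cat/[::]]_(j < n) nseq (sig j) j.+1.
have cL s : count_mem s L = (\sum_(j < n) (j.+1 == s) * sig j)%N.
  rewrite (big_morph (count (pred1 s)) (count_cat (pred1 s)) (erefl : count (pred1 s) [::] = 0%N)).
  by apply: eq_bigr => j _; rewrite count_nseq.
have sL : sumn L = n.
  rewrite (big_morph sumn sumn_cat (erefl : sumn [::] = 0%N)) -[RHS]sp.
  by apply: eq_bigr => j _; rewrite sumn_nseq mulnC.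
have aL : all (leq 1) L.
  by apply: (big_ind (fun s => all (leq 1) s)) => // [x y|j _];
    [rewrite all_cat => -> -> | apply/allP => x /nseqP [->]].
have [b bc] := exists_perm n0 aL sL.
exists b; apply/ffunP => i; apply/val_inj.
rewrite [LHS]cycle_typeE bc cL (bigD1 i) //= eqxx mul1n big1 ?addn0 //.
by move=> j ji; rewrite eqSS -[_ == _]/(j == i) (negbTE ji).
Qed.

End CT.
Local Open Scope ring_scope.
Section Leib.
Variable (T : comRingType) (I : finType) (D : T -> T).
Hypothesis (DD : forall x y, D (x + y) = D x + D y).
Hypothesis (DM : forall x y, D (x * y) = D x * y + x * D y).

Lemma D1 : D 1 = 0.
Proof.
have := DM 1 1; rewrite !mul1r mulr1 => h.
by apply: (@addrI _ (D 1)); rewrite addr0 -h.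
Qed.

Lemma D0 : D 0 = 0.
Proof.
have := DD 0 0; rewrite addr0 => h.
by apply: (@addrI _ (D 0)); rewrite addr0 -h.
Qed.

Lemma Dsum (J : Type) (r : seq J) (P : pred J) F :
  D (\sum_(j <- r | P j) F j) = \sum_(j <- r | P j) D (F j).
Proof.
elim: r => [|a r IH]; first by rewrite !big_nil D0.
by rewrite !big_cons; case: (P a) => //; rewrite DD IH.
Qed.

Lemma leibniz (A : {set I}) (g : I -> T) :
  D (\prod_(i in A) g i) = \sum_(i in A) D (g i) * \prod_(j in A :\ i) g j.
Proof.
elim: {A}_.+1 {-2}A (ltnSn #|A|) => // m IH A leA.
case: (set_0Vmem A) => [->|[x xA]].
  by rewrite !big_set0 D1.
rewrite (big_setD1 x xA) DM IH; last first.
  by rewrite -ltnS (leq_trans _ leA) // ltnS (cardsD1 x A) xA.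
rewrite (big_setD1 x xA) /=; congr (_ + _).
rewrite big_distrr /=; apply: eq_bigr => i /setD1P [ix iA].
rewrite [in RHS](big_setD1 x); last by rewrite !inE eq_sym ix xA.
rewrite mulrCA; congr (_ * (_ * _)); apply: eq_bigl => j.
by rewrite !inE andbCA.
Qed.
End Leib.
Section Alg.
Variable (R : numFieldType) (N : nat).
Local Notation MP := {mpoly R[N]}.

Lemma mderivX1 (i j : 'I_N) : mderiv i ('X_j : MP) = (j == i)%:R.
Proof.
rewrite mderivX mnm1E; case: eqP => [->|_]; last by rewrite scale0r.
have -> : (U_(i) - U_(i))%MM = 0%MM by apply/mnmP => l; rewrite mnmBE subnn mnm0E.
by rewrite mpolyX0 scale1r.
Qed.

Lemma mderivXn (i k : 'I_N) r : mderiv i ('X_k ^+ r : MP) =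
  (k == i)%:R * (r%:R * 'X_k ^+ r.-1).
Proof.
elim: r => [|r IH]; first by rewrite expr0 mderivC mul0r mulr0.
rewrite exprS mderivM IH mderivX1.
case: r IH => [|r] IH /=; first by rewrite !mul0r !mulr0 addr0 mul1r.
rewrite -[r.+2]addn1 natrD (exprS _ r); ring.
Qed.

Definition Lij (i j : 'I_N) (p : MP) :=
  'X_i ^+ 2 * mderiv i p - 'X_j ^+ 2 * mderiv j p.

Lemma LijD i j p q : Lij i j (p + q) = Lij i j p + Lij i j q.
Proof. rewrite /Lij !mderivD; ring. Qed.

Lemma LijM i j p q : Lij i j (p * q) = Lij i j p * q + p * Lij i j q.
Proof. rewrite /Lij !mderivM; ring. Qed.

Lemma mderiv_psum (i : 'I_N) r : mderiv i (psum R N r) = r%:R * 'X_i ^+ r.-1.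
Proof.
rewrite /psum raddf_sum /= (bigD1 i) //= mderivXn eqxx mul1r big1 ?addr0 //.
by move=> k ki; rewrite mderivXn (negbTE ki) mul0r.
Qed.

Lemma X2_psum (i : 'I_N) r :
  'X_i ^+ 2 * mderiv i (psum R N r) = r%:R * 'X_i ^+ r.+1.
Proof.
rewrite mderiv_psum; case: r => [|r]; first by rewrite !mul0r mulr0.
by rewrite mulrCA -exprD.
Qed.

Definition wit (i j : 'I_N) r : MP :=
  r%:R * \sum_(a < r.+1) 'X_i ^+ (r - a) * 'X_j ^+ a.

Lemma wit_ok i j r : ('X_i - 'X_j) * wit i j r = Lij i j (psum R N r).
Proof.
rewrite /Lij !X2_psum /wit mulrCA -subrXX /=; ring.
Qed.

Lemma sum_pairs u v :
  \sum_(i < N) \sum_(j < N | j != i) ('X_i ^+ u * 'X_j ^+ v : MP) =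
  psum R N u * psum R N v - psum R N (u + v).
Proof.
rewrite /psum big_distrl /= -sumrB; apply: eq_bigr => i _.
rewrite big_distrr /= [in RHS](bigD1 i) //= -exprD.
by rewrite addrAC subrr add0r.
Qed.

End Alg.
Section Alg2.
Variable (R : numFieldType) (N n : nat).
Local Notation MP := {mpoly R[N]}.

Definition psP (P : {set {set 'I_n}}) : MP := \prod_(c in P) psum R N #|c|.
Definition rwP i j (P : {set {set 'I_n}}) : MP :=
  \sum_(c in P) wit R i j #|c| * \prod_(c' in P :\ c) psum R N #|c'|.

Lemma rwP_ok i j P : ('X_i - 'X_j) * rwP i j P = Lij i j (psP P).
Proof.
rewrite /psP (@leibniz _ _ (@Lij R N i j) (@LijM R N i j)).
rewrite big_distrr /=.
by apply: eq_bigr => c _; rewrite mulrA wit_ok.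
Qed.

Lemma TP P : \sum_(i < N) \sum_(j < N | j != i) rwP i j P =
  \sum_(c in P) (#|c|%:R * \sum_(a < #|c|.+1)
      (psum R N (#|c| - a) * psum R N a - psum R N #|c|)) *
    \prod_(c' in P :\ c) psum R N #|c'|.
Proof.
rewrite /rwP.
under eq_bigr => i _ do rewrite exchange_big /=.
rewrite exchange_big /=; apply: eq_bigr => c _.
under eq_bigr => i _ do rewrite -big_distrl /=.
rewrite -big_distrl /=; congr (_ * _).
rewrite /wit.
under eq_bigr => i _ do under eq_bigr => j _ do rewrite big_distrr /=.
under eq_bigr => i _ do rewrite exchange_big /=.
rewrite exchange_big big_distrr /=; apply: eq_bigr => a _.
have -> : psum R N #|c| = psum R N (#|c| - a + a).
  by rewrite subnK // -ltnS.
rewrite -sum_pairs big_distrr /=.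
by apply: eq_bigr => i _; rewrite big_distrr.
Qed.

Definition mono (f : {ffun 'I_n -> 'I_N}) : MP := \prod_(k < n) 'X_(f k).
Definition mi (f : {ffun 'I_n -> 'I_N}) (i : 'I_N) := (\sum_(k < n) (f k == i))%N.

Lemma E_mono f i : 'X_i * mderiv i (mono f) = (mi f i)%:R * mono f.
Proof.
have -> : mono f = \prod_(k in [set: 'I_n]) 'X_(f k).
  by apply: eq_bigl => k; rewrite inE.
rewrite (@leibniz _ _ (mderiv i) (mderivM i)).
rewrite /mi natr_sum big_distrr big_distrl /=.
under [RHS]eq_bigl => k do rewrite -(in_setT k).
apply: eq_bigr => k _; rewrite mderivX1.
case: eqP => [<-|_]; last by rewrite !mul0r mulr0.
by rewrite !mul1r -(big_setD1 _ (in_setT k)).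
Qed.

Lemma S_i (i : 'I_N) (h : MP) : 'X_i ^+ 2 * mderiv i (mderiv i h) =
  'X_i * mderiv i ('X_i * mderiv i h) - 'X_i * mderiv i h.
Proof. rewrite mderivM mderivX1 eqxx /=; ring. Qed.

Lemma mderiv_natl (i : 'I_N) k (p : MP) : mderiv i (k%:R * p) = k%:R * mderiv i p.
Proof. by rewrite !mulr_natl mderivMn. Qed.

Lemma S_mono f : \sum_(i < N) 'X_i ^+ 2 * mderiv i (mderiv i (mono f)) =
  (\sum_(k < n) \sum_(l < n | l != k) (f k == f l))%N%:R * mono f.
Proof.
under eq_bigr => i _ do rewrite S_i E_mono mderiv_natl mulrCA E_mono
  mulrA -natrM -mulrBl.
rewrite -big_distrl /=; congr (_ * _).
rewrite sumrB -!natr_sum.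
have e1 : (\sum_(i < N) mi f i)%N = n.
  rewrite /mi exchange_big /= -[RHS]card_ord -sum1_card.
  apply: eq_bigr => k _; rewrite (bigD1 (f k)) //= eqxx big1 // => i.
  by rewrite eq_sym => /negbTE ->.
have e2 : (\sum_(i < N) mi f i * mi f i)%N =
   (n + \sum_(k < n) \sum_(l < n | l != k) (f k == f l))%N.
  rewrite /mi.
  under eq_bigr => i _ do rewrite big_distrl /=.
  under eq_bigr => i _ do under eq_bigr => k _ do rewrite big_distrr /=.
  rewrite exchange_big /=.
  rewrite -[X in (X + _)%N]card_ord -sum1_card -big_split /=.
  apply: eq_bigr => k _; rewrite exchange_big /= (bigD1 k) //= add1n.
  rewrite (bigD1 (f k)) //= eqxx big1 ?addn0; last first.
    by move=> i; rewrite eq_sym => /negbTE ->.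
  congr (_.+1); apply: eq_bigr => l _.
  rewrite (bigD1 (f k)) //= eqxx mul1n big1 ?addn0 1?eq_sym // => i.
  by rewrite eq_sym => /negbTE ->.
by rewrite e1 e2 natrD addrC addKr.
Qed.

End Alg2.
Section P3.
Variable (R : numFieldType) (N n : nat).
Local Notation MP := {mpoly R[N]}.

Definition Fixb (b : 'S_n) (f : {ffun 'I_n -> 'I_N}) := [forall x, f (b x) == f x].

Lemma FixbP (b : 'S_n) (f : {ffun 'I_n -> 'I_N}) : reflect (forall x, f (b x) = f x) (Fixb b f).
Proof. by apply: (iffP forallP) => H x; apply/eqP. Qed.

Definition Qs (b : 'S_n) : MP := \sum_(f : {ffun 'I_n -> 'I_N} | Fixb b f) mono R f.

Lemma Q_prod (b : 'S_n) : (0 < N)%N -> Qs b = psP R N (porbits b).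
Proof.
move=> N0; pose j0 := Ordinal N0.
pose P := porbits b.
pose h (g : {ffun {set 'I_n} -> 'I_N}) : {ffun 'I_n -> 'I_N} :=
  [ffun x => g (porbit b x)].
pose h' (f : {ffun 'I_n -> 'I_N}) : {ffun {set 'I_n} -> 'I_N} :=
  [ffun c => if c \in P then
     (if [pick x in c] is Some x then f x else j0) else j0].
have reprP c : c \in P -> exists2 x, [pick x in c] = Some x &
    x \in c /\ porbit b x = c.
  move=> cP; case: pickP => [x xc|].
    by exists x => //; split => //; rewrite (porbits_uniq cP xc).
  have [y cy] := porbits_mem cP.
  by move=> /(_ y); rewrite cy porbit_id.
rewrite /Qs (reindex_onto h h'); last first.
  move=> f /FixbP Ff; apply/ffunP => x; rewrite !ffunE porbit_in.
  have [y -> [yc _]] := reprP _ (porbit_in b x).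
  exact: fix_orbit Ff yc.
rewrite /psP.
have -> : \prod_(c in P) psum R N #|c| =
    \prod_(c in P) \sum_(i < N) \prod_(x in c) ('X_i : MP).
  by apply: eq_bigr => c _; apply: eq_bigr => i _; rewrite prodr_const.
rewrite (big_distr_big_dep j0) /=.
apply: eq_big => [g|g gP].
  have -> : Fixb b (h g) by apply/FixbP => x; rewrite !ffunE porbit_app.
  rewrite /=; apply/eqP/pfamilyP => [e|[sup _]].
    split => //; apply/subsetP => c; rewrite inE => gc.
    apply: contraR gc => cP.
    by rewrite -e !ffunE (negbTE cP).
  apply/ffunP => c; rewrite !ffunE.
  case: ifP => cP; first by have [y -> [_ yc]] := reprP c cP; rewrite ffunE yc.
  apply/eqP; rewrite eq_sym; apply: contraFT cP => gc.
  by apply: (subsetP sup); rewrite inE.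
rewrite /mono (partition_big (porbit b) (mem P)) /=; last by move=> x _; apply: porbit_in.
apply: eq_bigr => c cP; apply: eq_big => [x|x].
  have [y cy] := porbits_mem cP; by rewrite cy eq_porbit_mem.
by move=> /eqP <-; rewrite ffunE.
Qed.

End P3.
Section Main.
Variable (R : numFieldType) (N n : nat) (a : 'S_n).
Hypothesis N0 : (0 < N)%N.
Local Notation MP := {mpoly R[N]}.
Local Notation Pa := (porbits a).
Local Notation ps := (psum R N).

Definition Sop (h : MP) := \sum_(i < N) 'X_i ^+ 2 * mderiv i (mderiv i h).

Lemma Sop_sum (I : finType) (P : pred I) (F : I -> MP) :
  Sop (\sum_(x | P x) F x) = \sum_(x | P x) Sop (F x).
Proof.
have ms (i : 'I_N) (G : I -> MP) : mderiv i (\sum_(x | P x) G x) = \sum_(x | P x) mderiv i (G x).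
  by apply: big_morph; [exact: mderivD | exact: mderiv0].
rewrite /Sop; under eq_bigr => i _ do rewrite !ms big_distrr /=.
by rewrite exchange_big.
Qed.

Lemma L1 : Sop (Qs R N a) = \sum_(f | Fixb a f)
   (\sum_(k < n) \sum_(l < n | l != k) (f k == f l))%N%:R * mono R f.
Proof. by rewrite /Qs Sop_sum; apply: eq_bigr => f _; rewrite /Sop S_mono. Qed.

Lemma L2 (k l : 'I_n) : Qs R N (tperm k l * a)%g =
  \sum_(f | Fixb a f && (f k == f l)) mono R f +
  (if l \in porbit a k then Qs R N (tperm k l * a)%g - Qs R N a else 0).
Proof.
have e1 : \sum_(f : {ffun 'I_n -> 'I_N} | Fixb (tperm k l * a)%g f && (f k == f l)) mono R f =
          \sum_(f : {ffun 'I_n -> 'I_N} | Fixb a f && (f k == f l)) mono R f.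
  apply: eq_bigl => f; case: (boolP (f k == f l)) => [/eqP e|]; rewrite ?andbF //.
  rewrite !andbT; apply/FixbP/FixbP => H.
    exact: (proj1 (fix_tperm a e)) H.
  exact: (proj2 (fix_tperm a e)) H.
case: ifP => lC.
  have -> : \sum_(f : {ffun 'I_n -> 'I_N} | Fixb a f && (f k == f l)) mono R f = Qs R N a.
    apply: eq_bigl => f; case: (boolP (Fixb a f)) => //= /FixbP Ff.
    by rewrite (fix_orbit Ff lC) eqxx.
  by rewrite addrC subrK.
rewrite addr0 {1}/Qs (bigID (fun f : {ffun 'I_n -> 'I_N} => f k == f l)) /= e1 big_pred0 ?addr0 //.
move=> f; apply/negP => /andP [/FixbP Ff /negP []].
by rewrite (fix_merge (negbT lC) Ff).
Qed.

Lemma L3 (k : 'I_n) d : (0 < d)%N -> (d < rr a k)%N ->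
  Qs R N (bb a k d) - Qs R N a =
  (ps d * ps (rr a k - d) - ps (rr a k)) * \prod_(c in Pa :\ porbit a k) ps #|c|.
Proof.
move=> d0 dlt; rewrite !Q_prod // /psP (big_bb d0 dlt) (big_aa a k).
rewrite /= card_A1 // card_A2 // -/(rr a k).
set Pi := \big[_/_]_(c in _) _.
by rewrite mulrA -mulrBl.
Qed.

Definition Hc (c : {set 'I_n}) : MP :=
  (\sum_(d < #|c| | (0 < d)%N) (ps d * ps (#|c| - d) - ps #|c|)) *
  \prod_(c' in Pa :\ c) ps #|c'|.

Lemma L4 (k : 'I_n) : \sum_(l < n | l != k)
  (if l \in porbit a k then Qs R N (tperm k l * a)%g - Qs R N a else 0) =
  Hc (porbit a k).
Proof.
rewrite -big_mkcondr /=.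
have -> : \sum_(l < n | (l != k) && (l \in porbit a k))
    (Qs R N (tperm k l * a)%g - Qs R N a) =
    \sum_(l in porbit a k :\ k) (Qs R N (tperm k l * a)%g - Qs R N a).
  by apply: eq_bigl => l; rewrite !inE.
have -> : porbit a k :\ k =
    (fun d : 'I_(rr a k) => (a ^+ d)%g k) @: [set d : 'I_(rr a k) | (0 < d)%N].
  apply/setP => l; rewrite !inE; apply/andP/imsetP => [[lk /memC [d dr e]]|].
    exists (Ordinal dr) => //; rewrite inE lt0n /=; apply: contra lk => /eqP d0.
    by rewrite e d0 expg0 perm1.
  move=> [d]; rewrite inE => d0 ->; split; last exact: mem_porbit.
  apply/eqP => e; have := @exp_inj _ a k d 0 (ltn_ord d) (rr_gt0 _ _).
  by rewrite expg0 perm1 => /(_ e) dz; rewrite dz in d0.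
rewrite big_imset /=; last first.
  move=> d1 d2 _ _ /exp_inj => /(_ (ltn_ord d1) (ltn_ord d2)) e.
  exact: val_inj.
rewrite /Hc big_distrl /=; apply: eq_big => [d|d]; first by rewrite inE.
rewrite inE => d0; have := L3 d0 (ltn_ord d); rewrite /bb /ll => ->.
by [].
Qed.

Lemma L5 : \sum_(k < n) Hc (porbit a k) = \sum_(c in Pa) #|c|%:R * Hc c.
Proof.
rewrite (partition_big (porbit a) (mem Pa)) /=; last by move=> x _; apply: porbit_in.
apply: eq_bigr => c cP.
have [y cy] := porbits_mem cP.
rewrite (eq_bigr (fun=> Hc c)); last by move=> k /eqP ->.
rewrite (eq_bigl (mem c)); last by move=> k; rewrite cy eq_porbit_mem.
by rewrite sumr_const mulr_natl.
Qed.

Lemma L6 : \sum_(k < n) \sum_(l < n | l != k) Qs R N (tperm k l * a)%g =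
  Sop (Qs R N a) + \sum_(c in Pa) #|c|%:R * Hc c.
Proof.
under eq_bigr => k _ do under eq_bigr => l _ do rewrite L2.
under eq_bigr => k _ do rewrite big_split /= L4.
rewrite big_split /= L5 L1; congr (_ + _).
have sc (k l : 'I_n) : \sum_(f : {ffun 'I_n -> 'I_N} | Fixb a f && (f k == f l)) mono R f =
    \sum_(f : {ffun 'I_n -> 'I_N} | Fixb a f) (f k == f l)%:R * mono R f.
  rewrite big_mkcondr; apply: eq_bigr => f _.
  by case: (f k == f l); rewrite ?mul1r ?mul0r.
under eq_bigr => k _ do under eq_bigr => l _ do rewrite sc.
under eq_bigr => k _ do rewrite exchange_big /=.
rewrite exchange_big /=; apply: eq_bigr => f _.
rewrite natr_sum big_distrl /=; apply: eq_bigr => k _.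
by rewrite natr_sum big_distrl.
Qed.

Lemma ps0 : ps 0 = N%:R.
Proof.
by rewrite /psum (eq_bigr (fun _ => 1)) ?sumr_const ?card_ord.
Qed.

Lemma sum_split r : (0 < r)%N ->
  \sum_(b < r.+1) (ps (r - b) * ps b - ps r) =
  (N%:R - 1) * ps r *+ 2 + \sum_(d < r | (0 < d)%N) (ps d * ps (r - d) - ps r).
Proof.
case: r => // r _.
rewrite big_ord_recl big_ord_recr /= subn0 subnn ps0.
rewrite [in RHS]big_mkcond [in RHS]big_ord_recl /= add0r.
have -> : \sum_(i < r) (ps (r.+1 - bump 0 i) * ps (bump 0 i) - ps r.+1) =
    \sum_(i < r) (if (0 < bump 0 i)%N then
       ps (bump 0 i) * ps (r.+1 - bump 0 i) - ps r.+1 else 0).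
  by apply: eq_bigr => i _; rewrite /bump /= mulrC.
set S := \sum_(i < r) _.
have -> : bump 0 r = r.+1 by [].
rewrite mulr2n; ring.
Qed.

Lemma L7 : \sum_(i < N) \sum_(j < N | j != i) rwP R i j Pa =
  ((N%:R - 1) *+ 2 * n%:R) * psP R N Pa + \sum_(c in Pa) #|c|%:R * Hc c.
Proof.
rewrite TP.
have -> : \sum_(c in Pa) (#|c|%:R * \sum_(b < #|c|.+1)
      (ps (#|c| - b) * ps b - ps #|c|)) * \prod_(c' in Pa :\ c) ps #|c'| =
   \sum_(c in Pa) (((N%:R - 1) *+ 2 * #|c|%:R) * psP R N Pa + #|c|%:R * Hc c).
  apply: eq_bigr => c cP; have /andP [c0 _] := porbits_card cP.
  rewrite sum_split // /Hc /psP (big_setD1 c cP) /=.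
  rewrite mulrDr mulrDl; congr (_ + _); last by rewrite mulrA.
  rewrite -!mulrnAl; ring.
rewrite big_split /=; congr (_ + _).
rewrite -big_distrl /= -big_distrr /= -natr_sum.
by rewrite porbits_sum.
Qed.

End Main.
Section Transp.
Variable n : nat.

Lemma sum_transp (V : zmodType) (F : 'S_n -> V) :
  \sum_(k < n) \sum_(l < n | l != k) F (tperm k l) =
  (\sum_(t : 'S_n | is_transposition t) F t) *+ 2.
Proof.
rewrite pair_big_dep /=.
rewrite (partition_big (fun p : 'I_n * 'I_n => tperm p.1 p.2) (@is_transposition n)) /=; last first.
  move=> [k l] /= lk; apply/existsP; exists k; apply/existsP; exists l.
  by rewrite eq_sym lk eqxx.
rewrite -sumrMnl; apply: eq_bigr => t /existsP [x /existsP [y /andP [xy /eqP te]]].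
rewrite (eq_bigr (fun=> F t)); last by move=> p /andP [_ /eqP ->].
rewrite (eq_bigl (mem [set (x, y); (y, x)])); last first.
  move=> [k l] /=; rewrite !inE te !xpair_eqE.
  apply/andP/orP => [[lk /eqP e]|[] /andP [/eqP -> /eqP ->]].
    have ek : l = tperm x y k by rewrite -e tpermL.
    move: ek lk; case: tpermP => [->|->|kx ky] -> lk.
    - by left; rewrite !eqxx.
    - by right; rewrite !eqxx.
    - by rewrite eqxx in lk.
  - by rewrite eq_sym xy.
  - by rewrite xy tpermC.
rewrite big_setU1 /= ?big_set1 ?mulr2n //.
by rewrite inE xpair_eqE negb_and xy.
Qed.

End Transp.
Lemma psP_ct (R : numFieldType) (N n : nat) (b : 'S_n) :
  psP R N (porbits b) = psum_part R N (cycle_type b).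
Proof.
rewrite /psP big_by_size; last exact: porbits_card.
rewrite /psum_part; apply: eq_bigr => i _.
by rewrite prodr_const cycle_typeE.
Qed.

Unset Implicit Arguments.

Theorem mainTheorem8 (R : numFieldType) (n N : nat) :
  (1 <= n)%N -> (n < N)%N ->
  forall sig : mult_vec n, is_partition sig ->
  exists q : {mpoly R[N]},
    Dstar_is (psum_part R N sig) q /\
    2%:R^-1 *: q =
      (n * (N - 1))%:R *: psum_part R N sig
      + \sum_(lam : mult_vec n | is_partition lam)
          (A_entry sig lam)%:R *: psum_part R N lam.
Proof.
move=> n1 nN sig sigP.
have N0 : (0 < N)%N by apply: leq_trans nN.
have [a0 a0e] := ct_exists n1 sigP.
have [a [ae AE]] : exists a : 'S_n, cycle_type a = sig /\ forall lam,
    A_entry sig lam =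
    #|[set t : 'S_n | is_transposition t && (cycle_type (t * a)%g == lam)]|.
  rewrite /A_entry; case: pickP => [a /eqP ae|none]; first by exists a.
  by have := none a0; rewrite /= a0e eqxx.
set p := psP R N (porbits a).
have -> : psum_part R N sig = p by rewrite /p psP_ct ae.
have SL : \sum_(lam : mult_vec n | is_partition lam)
    (A_entry sig lam)%:R *: psum_part R N lam =
    \sum_(t : 'S_n | is_transposition t) Qs R N (t * a)%g.
  rewrite (partition_big (fun t : 'S_n => cycle_type (t * a)%g) (@is_partition n))
    /=; last by move=> t _; apply: ct_partition.
  apply: eq_bigr => lam _; rewrite AE scaler_nat.
  rewrite (eq_bigr (fun=> psum_part R N lam)); last first.
    by move=> t /andP [_ /eqP <-]; rewrite Q_prod // psP_ct.
  rewrite -sumr_const; apply: eq_bigl => t; by rewrite inE.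
exists (Sop p + \sum_(i < N) \sum_(j < N | j != i) rwP R i j (porbits a)).
split.
  exists (fun i j => rwP R i j (porbits a)); split => //.
  by move=> i j _; rewrite rwP_ok.
rewrite SL.
set S := \sum_(t : 'S_n | is_transposition t) Qs R N (t * a)%g.
have Hq : Sop p + \sum_(i < N) \sum_(j < N | j != i) rwP R i j (porbits a) =
    p *+ ((N - 1) * 2 * n) + S *+ 2.
  rewrite L7 // -sum_transp L6 // Q_prod // -/p.
  have -> : (N%:R - 1) *+ 2 * n%:R * p = p *+ ((N - 1) * 2 * n).
    by rewrite -[RHS]mulr_natl !natrM natrB // -mulr_natr.
  by rewrite addrCA.
rewrite Hq.
have -> : p *+ ((N - 1) * 2 * n) + S *+ 2 = (p *+ (n * (N - 1)) + S) *+ 2.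
  rewrite mulrnDl -mulrnA; congr (_ *+ _ + _).
  by rewrite mulnAC [((N - 1) * n)%N]mulnC.
rewrite scaler_nat -scalerMnr scalerMnl -mulr_natr mulVf ?scale1r //.
by rewrite pnatr_eq0.
Qed.
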